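(* Let $I$ be a compact interval, $n\in\mathbb{N}$ and $A_0,A_1,\dots,A_n$ non-empty compact intervals of $\mathbb{R}$. Let $p:I\to\mathcal{K}(\mathbb{R})$ be the polynomial $p(x)=A_0\oplus A_1x\oplus A_2x^2\oplus\cdots\oplus A_nx^n$. Then $\dim_H\mathcal{G}_*(p)=1$.
   Context: $\mathcal{K}(\mathbb{R})$: non-empty compact subsets of $\mathbb{R}$ with Hausdorff distance $\mathfrak{H}$. For compact $A,B$: $\Lambda_A(b)=\{a\in A:|b-a|=\min_{a'\in A}|b-a'|\}$, $\Lambda(A,B)=\{(a,b)\in A\times B:a\in\Lambda_A(b)\text{ or }b\in\Lambda_B(a)\}$; metric chains $\mathrm{Ch}(A_0,\dots,A_n)=\{(a_0,\dots,a_n):(a_j,a_{j+1})\in\Lambda(A_j,A_{j+1})\ \forall j\}$; and $A_0\oplus A_1x\oplus\cdots\oplus A_nx^n=\{\sum_{j=0}^n x^ja_j:(a_0,\dots,a_n)\in\mathrm{Ch}(A_0,\dots,A_n)\}$ (metric linear combination with coefficients $x^j$). $\mathcal{G}_*(p)=\{(x,p(x)):x\in I\}$ with metric $d((x,Y),(y,Z))=|x-y|+\mathfrak{H}(Y,Z)$; $\dim_H$ is Hausdorff dimension. *)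

(* Defs.v *)
From HB Require Import structures.
From mathcomp Require Import all_boot all_order all_algebra.
From mathcomp Require Import all_classical all_reals all_analysis.
Set Implicit Arguments. Unset Strict Implicit. Unset Printing Implicit Defensive.
Import Order.TTheory GRing.Theory Num.Theory.
Import numFieldNormedType.Exports.
Local Open Scope classical_set_scope.
Local Open Scope ring_scope.

Section Defs.
Variable R : realType.

Definition metric_proj (A : set R) (b : R) : set R :=
  [set a | A a /\ forall a', A a' -> `|b - a| <= `|b - a'|].

Definition metric_pairs (A B : set R) : set (R * R) :=
  [set ab | A ab.1 /\ B ab.2 /\ (metric_proj A ab.2 ab.1 \/ metric_proj B ab.1 ab.2)].

(** Metric chains Ch(A_0,...,A_n), a chain represented by a : nat -> R
    (only the entries a 0, ..., a n matter). *)
Definition metric_chain (n : nat) (A : nat -> set R) (a : nat -> R) : Prop :=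
  (forall j, (j <= n)%N -> A j (a j)) /\
  (forall j, (j < n)%N -> metric_pairs (A j) (A j.+1) (a j, a j.+1)).

Definition metric_poly (n : nat) (A : nat -> set R) (x : R) : set R :=
  [set \sum_(j < n.+1) x ^+ j * a j | a in metric_chain n A].

Definition dist_to (B : set R) (a : R) : R := inf [set `|a - b| | b in B].
Definition hausdorff_dist (A B : set R) : R :=
  Num.max (sup [set dist_to B a | a in A]) (sup [set dist_to A b | b in B]).

Definition graph_dist (u v : R * set R) : R :=
  `|u.1 - v.1| + hausdorff_dist u.2 v.2.

Definition setgraph (I : set R) (p : R -> set R) : set (R * set R) :=
  [set (x, p x) | x in I].

Section Hausdorff.
Variables (T : Type) (d : T -> T -> R).

Local Open Scope ereal_scope.

Definition diam (U : set T) : \bar R :=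
  ereal_sup [set (d u v)%:E | u in U & v in U].

(** diam(U)^s, with diam(empty)^s = 0 (only used for sets of finite diameter). *)
Definition diam_pow (s : R) (U : set T) : \bar R :=
  if pselect (U !=set0) then (powR (fine (diam U)) s)%:E else 0.

Definition hausdorff_content (s delta : R) (E : set T) : \bar R :=
  ereal_inf [set \sum_(i <oo) diam_pow s (F i) | F in
    [set F : nat -> set T | E `<=` \bigcup_i F i /\
                            forall i, diam (F i) <= delta%:E]].

Definition hausdorff_measure (s : R) (E : set T) : \bar R :=
  ereal_sup [set hausdorff_content s delta E | delta in [set delta : R | (0 < delta)%R]].

Definition hausdorff_dim (E : set T) : \bar R :=
  ereal_inf [set s%:E | s in [set s : R | (0 <= s)%R /\ hausdorff_measure s E = 0]].
End Hausdorff.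

End Defs.

(* Main.v *)
Require Import Defs.
From HB Require Import structures.
From mathcomp Require Import all_boot all_order all_algebra.
From mathcomp Require Import all_classical all_reals all_analysis.
From mathcomp Require Import ring lra zify.
Import Order.TTheory GRing.Theory Num.Theory.
Local Open Scope classical_set_scope.
Local Open Scope ring_scope.

Section Lip.
Variable R : realType.

Lemma dist_to_ge0 (B : set R) (z : R) : 0 <= dist_to B z.
Proof.
rewrite /dist_to.
have [[w Bw]|B0] := pselect (B !=set0).
  apply: lb_le_inf; first by exists `|z - w|, w.
  by move=> _ [v _ <-].
have /eqP B0' : B == set0 by apply/negPn/negP => /set0P.
by rewrite B0' image_set0 inf0.
Qed.

Lemma sup_ge0 (S : set R) : (forall x, S x -> 0 <= x) -> 0 <= sup S.
Proof.
move=> H.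
have [hs|nhs] := pselect (has_sup S); last by rewrite sup_out.
case: (hs) => [[x Sx] _].
apply: le_trans (H _ Sx) _.
exact: sup_upper_bound.
Qed.

Lemma hd_ge0 (A B : set R) : 0 <= hausdorff_dist A B.
Proof.
rewrite /hausdorff_dist le_max; apply/orP; left.
apply: sup_ge0 => _ [x _ <-]; exact: dist_to_ge0.
Qed.

Lemma gd_ge (v w : R * set R) : `|v.1 - w.1| <= graph_dist v w.
Proof. rewrite /graph_dist lerDl; exact: hd_ge0. Qed.

Lemma gd_ge0 (v w : R * set R) : 0 <= graph_dist v w.
Proof. exact: le_trans (normr_ge0 _) (gd_ge v w). Qed.

Lemma bnd_abs (a b x : R) : a <= x <= b -> `|x| <= `|a| + `|b|.
Proof.
move=> /andP[h1 h2].
have := ler_norm a; have := ler_norm b; have := ler_norm (-a); have := ler_norm (-b).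
rewrite !normrN => ? ? ? ?.
rewrite ler_norml; apply/andP; split; lra.
Qed.

Lemma pow_lip (a b : R) (j : nat) : exists c, 0 <= c /\
  forall x y, a <= x <= b -> a <= y <= b -> `|x ^+ j - y ^+ j| <= c * `|x - y|.
Proof.
set B := `|a| + `|b|.
have B0 : 0 <= B by rewrite addr_ge0.
elim: j => [|j [c [c0 IH]]].
  by exists 0; split => // x y _ _; rewrite !expr0 subrr normr0 mul0r.
exists (B * c + B ^+ j); split.
  by rewrite addr_ge0 ?mulr_ge0 ?exprn_ge0.
move=> x y hx hy.
have -> : x ^+ j.+1 - y ^+ j.+1 = x * (x ^+ j - y ^+ j) + (x - y) * y ^+ j.
  by rewrite !exprS; ring.
apply: le_trans (ler_normD _ _) _.
rewrite !normrM normrX.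
have h1 := IH x y hx hy.
have h2 : `|y| ^+ j <= B ^+ j by apply: lerXn2r; rewrite ?nnegrE ?(bnd_abs a b y hy).
have h3 := bnd_abs a b x hx.
have h4 : `|x| * `|x ^+ j - y ^+ j| <= B * (c * `|x - y|).
  by apply: ler_pM.
have h5 : `|x - y| * `|y| ^+ j <= `|x - y| * B ^+ j.
  by apply: ler_wpM2l.
rewrite mulrDl; apply: lerD; first by rewrite -mulrA.
by rewrite [B ^+ j * _]mulrC.
Qed.


Lemma sum_lip (a b : R) (M : nat -> R) (m : nat) : (forall j, 0 <= M j) ->
  exists L, 0 <= L /\ forall x y (al : nat -> R), a <= x <= b -> a <= y <= b ->
  (forall j, (j < m)%N -> `|al j| <= M j) ->
  `|\sum_(j < m) x ^+ j * al j - \sum_(j < m) y ^+ j * al j| <= L * `|x - y|.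
Proof.
move=> M0; elim: m => [|m [L [L0 IH]]].
  by exists 0; split => // x y al _ _ _; rewrite !big_ord0 subrr normr0 mul0r.
have [c [c0 hc]] := pow_lip a b m.
exists (L + c * M m); split; first by rewrite addr_ge0 ?mulr_ge0.
move=> x y al hx hy hal.
rewrite !big_ord_recr /=.
have -> : \sum_(i < m) x ^+ i * al i + x ^+ m * al m -
   (\sum_(i < m) y ^+ i * al i + y ^+ m * al m) =
   (\sum_(i < m) x ^+ i * al i - \sum_(i < m) y ^+ i * al i) + (x ^+ m - y ^+ m) * al m.
  by ring.
apply: le_trans (ler_normD _ _) _.
rewrite [(L + _) * _]mulrDl; apply: lerD.
  by apply: IH => // j hj; apply: hal; apply: ltnW.
rewrite normrM.
have := hc x y hx hy; have := hal m (ltnSn m) => h1 h2.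
rewrite [c * M m]mulrC -mulrA [M m * _]mulrC.
by apply: ler_pM.
Qed.

Section HD.
Variables (a b : R) (n : nat) (l u : nat -> R).
Let A := fun j => `[l j, u j]%classic : set R.
Let P := metric_poly n A.

Lemma chain_bnd (al : nat -> R) : metric_chain n A al ->
  forall j, (j < n.+1)%N -> `|al j| <= `|l j| + `|u j|.
Proof.
move=> [h _] j hj.
have := h j hj; rewrite /A /= in_itv /= => hh.
exact: bnd_abs.
Qed.

Lemma hd_lip : exists L, 0 <= L /\ forall x y, a <= x <= b -> a <= y <= b ->
  hausdorff_dist (P x) (P y) <= L * `|x - y|.
Proof.
have [L [L0 HL]] := sum_lip a b (fun j => `|l j| + `|u j|) n.+1
  (fun j => addr_ge0 (normr_ge0 _) (normr_ge0 _)).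
have half : forall x y, a <= x <= b -> a <= y <= b ->
    sup [set dist_to (P y) z | z in P x] <= L * `|x - y|.
  move=> x y hx hy.
  have [[w Sw]|S0] := pselect ([set dist_to (P y) z | z in P x] !=set0).
    apply: ge_sup; first by exists w.
    move=> _ [z [al hal <-] <-].
    rewrite /dist_to.
    set S := [set _ | _ in _].
    have hS : has_lbound S by exists 0 => _ [? _ <-].
    have Sv : S `|\sum_(j < n.+1) x ^+ j * al j - \sum_(j < n.+1) y ^+ j * al j|.
      by exists (\sum_(j < n.+1) y ^+ j * al j) => //; exists al.
    apply: le_trans (ge_inf hS Sv) _.
    apply: HL => //; exact: chain_bnd.
  have /eqP -> : [set dist_to (P y) z | z in P x] == set0.
    by apply/negPn/negP => /set0P.
  by rewrite sup0 mulr_ge0.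
move: L0 HL half => L0 _ half.
exists L; split => // x y hx hy.
rewrite /hausdorff_dist ge_max (half x y hx hy) /=.
by rewrite distrC; apply: half.
Qed.

End HD.

Section Diam.
Variables (T : Type) (d : T -> T -> R).
Hypothesis d0 : forall u v, 0 <= d u v.

Lemma diam_pow_ge0 s U : (0 <= diam_pow d s U)%E.
Proof. by rewrite /diam_pow; case: pselect => ? //; rewrite lee_fin powR_ge0. Qed.

Lemma diam_pow_set0 s : diam_pow d s set0 = 0%E.
Proof. by rewrite /diam_pow; case: pselect => // -[? []]. Qed.

Lemma diam_le U w : (forall u v, U u -> U v -> d u v <= w) -> (diam d U <= w%:E)%E.
Proof.
move=> H; apply: ge_ereal_sup => _ [x Ux [y Uy <-]].
by rewrite lee_fin; apply: H.
Qed.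

Lemma diam_ge U u v : U u -> U v -> ((d u v)%:E <= diam d U)%E.
Proof. by move=> Uu Uv; apply: ereal_sup_ubound; exists u => //; exists v. Qed.

Lemma diam_pow_le s U w : 0 <= s -> (forall u v, U u -> U v -> d u v <= w) ->
  (diam_pow d s U <= (w `^ s)%:E)%E.
Proof.
move=> s0 H; rewrite /diam_pow; case: pselect => [[u Uu]|?]; last first.
  by rewrite lee_fin powR_ge0.
have h1 : (0%:E <= diam d U)%E.
  by apply: le_trans (@diam_ge U u u Uu Uu); rewrite lee_fin.
have h2 := @diam_le U w H.
move: (diam d U) h1 h2 => [r| |] //=; rewrite !lee_fin => h1 h2.
by apply: ge0_ler_powR => //; rewrite nnegrE (le_trans h1 h2).
Qed.

End Diam.

Section Up.
Variables (a b : R) (n : nat) (l u : nat -> R).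
Hypothesis hab : a < b.
Let P := metric_poly n (fun j => `[l j, u j]%classic).
Let E := setgraph `[a, b]%classic P.

Lemma graph_lip : exists K, 0 < K /\ forall x y, a <= x <= b -> a <= y <= b ->
  graph_dist (x, P x) (y, P y) <= K * `|x - y|.
Proof.
have [L [L0 HL]] := hd_lip a b n l u.
exists (1 + L); split; first by rewrite ltr_pwDl.
move=> x y hx hy; rewrite /graph_dist /= mulrDl mul1r lerD2l.
exact: HL.
Qed.

Lemma content_up s δ : 1 < s -> 0 < δ ->
  hausdorff_content (@graph_dist R) s δ E = 0%E.
Proof.
move=> s1 δ0.
have [K [K0 HK]] := graph_lip.
have s0 : 0 <= s by apply: le_trans (ltW s1); rewrite ler01.
apply/eqP; rewrite eq_le; apply/andP; split; last first.
  apply: le_ereal_inf_tmp => _ [F _ <-]; apply: nneseries_ge0 => i _ _.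
  exact: diam_pow_ge0.
apply/lee_addgt0Pr => e e0; rewrite add0e.
set c := K * (b - a).
have c0 : 0 < c by rewrite mulr_gt0 // subr_gt0.
set X := (e / (4 * c)) `^ (s - 1)^-1.
set τ := Num.min δ X.
have τ0 : 0 < τ by rewrite lt_min δ0 powR_gt0 // divr_gt0 // mulr_gt0.
set N := (Num.Def.trunc (2 * c / τ)).+1.
have N0 : 0 < N%:R :> R by rewrite ltr0n.
have hN : 2 * c / τ < N%:R := truncnS_gt _.
set w := 2 * c / N%:R.
have w0 : 0 < w by rewrite divr_gt0 // mulr_gt0.
have wτ : w < τ by rewrite /w ltr_pdivrMr // [τ * _]mulrC -ltr_pdivrMr.
set h := (b - a) / N%:R.
have h0 : 0 < h by rewrite divr_gt0 // subr_gt0.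
have hw : K * (2 * h) = w by rewrite /w /c /h; field; rewrite lt0r_neq0.
pose F : nat -> set (R * set R) := fun i => if (i <= N)%N then
  [set (x, P x) | x in [set x | a <= x <= b /\ `|x - (a + i%:R * h)| <= h]] else set0.
have FN : forall i, (N < i)%N -> F i = set0 by move=> i hi; rewrite /F leqNgt hi.
have hF : forall i p q, F i p -> F i q -> graph_dist p q <= w.
  move=> i p q; rewrite /F; case: ifP => // _ [x [hx hxi] <-] [y [hy hyi] <-].
  apply: le_trans (HK x y hx hy) _; rewrite -hw ler_pM2l //.
  move: hxi hyi; rewrite !ler_norml => /andP[? ?] /andP[? ?]; apply/andP; split; lra.
apply: (@le_trans _ _ (\sum_(i <oo) diam_pow (@graph_dist R) s (F i))%E).
  apply: ereal_inf_lbound; exists F => //; split.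
    move=> _ [x hx <-].
    move: hx; rewrite /= in_itv /= => /andP[xa xb].
    have q0 : 0 <= (x - a) / h by rewrite divr_ge0 ?subr_ge0 // ltW.
    set i := Num.Def.trunc ((x - a) / h).
    have hi1 : i%:R <= (x - a) / h by rewrite truncn_le.
    have hi2 : (x - a) / h < i.+1%:R := truncnS_gt _.
    have iN : (i <= N)%N.
      rewrite /i truncn_le_nat; apply: (@le_lt_trans _ _ N%:R); last by rewrite ltr_nat.
      have -> : N%:R = (b - a) / h :> R.
        by rewrite /h; field; rewrite ?lt0r_neq0 ?subr_gt0.
      by rewrite ler_pM2r ?invr_gt0 // lerD2r.
    exists i => //; rewrite /F iN; exists x => //; split; first by rewrite xa xb.
    move: hi1 hi2; rewrite ler_pdivlMr // ltr_pdivrMr // -natr1 => hi1 hi2.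
    rewrite ler_norml; apply/andP; split; nra.
  move=> i; apply: diam_le => p q Fp Fq.
  apply: le_trans (hF _ _ _ Fp Fq) _.
  by apply: le_trans (ltW wτ) _; rewrite ge_min lexx.
have ws0 : 0 <= w `^ s by apply: powR_ge0.
apply: le_trans (@lee_nneseries _ _
   (fun i => if (i <= N)%N then (w `^ s)%:E else 0%E) xpredT 0%N _ _) _.
- by move=> i _ _; apply: diam_pow_ge0.
- move=> i _; case: (leqP i N) => iN.
    by apply: diam_pow_le => //; [exact: gd_ge0 | exact: hF].
  by rewrite FN // diam_pow_set0.
rewrite (nneseries_split 0 N.+1); last by move=> k _; case: ifP => // _; rewrite lee_fin.
rewrite eseries0 ?adde0; last by move=> k hk _; rewrite leqNgt hk.
rewrite add0n big_mkord.
rewrite (eq_bigr (fun=> (w `^ s)%:E)); last by move=> k _; rewrite -ltnS ltn_ord.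
rewrite sumEFin sumr_const card_ord lee_fin -mulr_natl.
have s0' : 0 < s by apply: lt_trans s1; rewrite ltr01.
have h1 : N.+1%:R <= 2 * N%:R :> R by rewrite -natrM ler_nat /N mul2n -addnn addSn ltnS leq_addl.
have h2 : w `^ s = w * w `^ (s - 1) by rewrite mulr_powRB1 // ltW.
have h3 : N%:R * w = 2 * c by rewrite /w; field; rewrite lt0r_neq0.
have h4 : w `^ (s - 1) <= e / (4 * c).
  apply: (@le_trans _ _ (X `^ (s - 1))).
    apply: ge0_ler_powR; rewrite ?nnegrE ?subr_ge0 ?(ltW s1) ?(ltW w0) ?powR_ge0 //.
    by apply: le_trans (ltW wτ) _; rewrite ge_min lexx orbT.
  rewrite /X -powRrM mulVf ?powRr1 //.
    by apply: divr_ge0; [exact: ltW | rewrite mulr_ge0 // ltW].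
  by rewrite subr_eq0 gt_eqF.
apply: le_trans (ler_wpM2r ws0 h1) _.
rewrite h2.
have -> : 2 * N%:R * (w * w `^ (s - 1)) = 2 * (N%:R * w) * w `^ (s - 1) by ring.
rewrite h3.
apply: (@le_trans _ _ (2 * (2 * c) * (e / (4 * c)))).
  rewrite ler_pM2l; first exact: h4.
  by apply: mulr_gt0 => //; apply: mulr_gt0.
have -> : 2 * (2 * c) * (e / (4 * c)) = e.
  have cn : c != 0 by rewrite lt0r_neq0.
  by field.
by [].
Qed.

Lemma diam_fin (U : set (R * set R)) : (diam (@graph_dist R) U <= 1%:E)%E ->
  0 <= fine (diam (@graph_dist R) U) <= 1 /\
  (U !=set0 -> diam (@graph_dist R) U = (fine (diam (@graph_dist R) U))%:E) /\
  (~ (U !=set0) -> fine (diam (@graph_dist R) U) = 0).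
Proof.
move=> hle.
have [[v Uv]|U0] := pselect (U !=set0).
  have h1 := @diam_ge _ (@graph_dist R) U v v Uv Uv.
  have h0 : (0%:E <= (graph_dist v v)%:E)%E by rewrite lee_fin gd_ge0.
  have h2 := le_trans h0 h1.
  move: (diam _ U) h2 hle => [r| |] //=; rewrite !lee_fin => h2 h3.
  rewrite h2 h3; split => //; split => // U0; exfalso; apply: U0; by exists v.
have hN : (diam (@graph_dist R) U <= -oo)%E.
  by apply: ge_ereal_sup => z [x Ux _]; exfalso; apply: U0; exists x.
move: (diam _ U) hN => [r| |] //= _.
by rewrite lexx ler01; split => //; split.
Qed.

Lemma content_low s : 0 <= s <= 1 ->
  (((b - a) / 2)%:E <= hausdorff_content (@graph_dist R) s 1 E)%E.
Proof.
move=> /andP[s0 s1].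
apply: le_ereal_inf_tmp => _ [F [cov dF] <-].
pose D i := fine (diam (@graph_dist R) (F i)).
pose c i := (xget ((0 : R), (set0 : set R)) (F i)).1.
pose G i := `[c i - D i, c i + D i]%classic : set R.
have hG : forall i, (lebesgue_measure (G i) <= (2 * D i)%:E)%E.
  move=> i; have [/andP[D0 D1] _] := diam_fin (F i) (dF i).
  rewrite lebesgue_measure_itv /=; case: ifP => _; last by rewrite lee_fin mulr_ge0.
  by rewrite -EFinD lee_fin; rewrite le_eqVlt; apply/orP; left; apply/eqP; ring.
have hG2 : forall i, ((2 * D i)%:E <= 2%:E * diam_pow (@graph_dist R) s (F i))%E.
  move=> i; have [/andP[D0 D1] [hne he]] := diam_fin (F i) (dF i).
  rewrite /diam_pow; case: pselect => [Fn|Fe].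
    rewrite -EFinM lee_fin ler_pM2l //.
    have [->|Dn0] := eqVneq (D i) 0; first by rewrite powR_ge0.
    by apply: ger1_powR => //; rewrite D1 andbT lt0r Dn0 D0.
  by rewrite /D he // mulr0 mule0.
have cov2 : `[a, b]%classic `<=` \bigcup_i G i.
  move=> x hx.
  have [i _ Fi] := cov (x, P x) (ex_intro2 _ _ x hx erefl).
  exists i => //.
  have Fv := xgetI ((0 : R), (set0 : set R)) Fi.
  have [_ [hne _]] := diam_fin (F i) (dF i).
  have h1 := @diam_ge _ (@graph_dist R) (F i) _ _ Fi Fv.
  rewrite hne ?lee_fin in h1; last by exists (x, P x).
  have h2 := le_trans (gd_ge _ _) h1.
  move: h2; rewrite /G /= in_itv /= -/(c i) -/(D i) ler_norml => /andP[? ?].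
  apply/andP; split; lra.
have := @measure_sigma_subadditive _ _ _ (@lebesgue_measure R) `[a, b]%classic G
  (fun i => measurable_itv _) (measurable_itv _) cov2.
have hl : lebesgue_measure (`[a, b]%classic : set R) = (b - a)%:E.
  by rewrite lebesgue_measure_itv /= lte_fin hab -EFinD.
move=> hm.
have hm' : ((b - a)%:E <= \sum_(n <oo) lebesgue_measure (G n))%E.
  by rewrite -hl; exact: hm.
have h3 : (\sum_(n <oo) lebesgue_measure (G n) <=
    \sum_(n <oo) (2%:E * diam_pow (@graph_dist R) s (F n)))%E.
  apply: lee_nneseries => [i _ _| i _]; first exact: measure_ge0.
  exact: le_trans (hG i) (hG2 i).
rewrite nneseriesZl in h3; last by move=> i _; apply: diam_pow_ge0.
have H := le_trans hm' h3.
rewrite (_ : ((b - a) / 2)%:E = (2^-1)%:E * (b - a)%:E)%E; last by rewrite -EFinM mulrC.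
apply: le_trans (lee_wpmul2l _ H) _; first by rewrite lee_fin invr_ge0.
by rewrite muleA -EFinM mulVf ?mul1e.
Qed.

Lemma measure_up s : 1 < s -> hausdorff_measure (@graph_dist R) s E = 0%E.
Proof.
move=> s1; rewrite /hausdorff_measure; apply/eqP; rewrite eq_le; apply/andP; split.
  by apply: ge_ereal_sup => _ [δ δ0 <-]; rewrite content_up.
by apply: ereal_sup_ubound; exists 1; [exact: ltr01 | exact: content_up].
Qed.

Lemma measure_low s : 0 <= s < 1 -> hausdorff_measure (@graph_dist R) s E != 0%E.
Proof.
move=> /andP[s0 s1].
have h1 := content_low s (andb_true_intro (conj s0 (ltW s1))).
have h2 : (hausdorff_content (@graph_dist R) s 1 E <= hausdorff_measure (@graph_dist R) s E)%E.
  by apply: ereal_sup_ubound; exists 1 => //; exact: ltr01.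
have h3 : (0%:E < ((b - a) / 2)%:E)%E by rewrite lte_fin divr_gt0 // subr_gt0.
by rewrite gt_eqF // (lt_le_trans h3 (le_trans h1 h2)).
Qed.

End Up.
End Lip.

Theorem theorem4p12 (R : realType) (a b : R) (n : nat) (l u : nat -> R) :
  a < b ->
  (forall j, (j <= n)%N -> l j <= u j) ->
  hausdorff_dim (@graph_dist R)
    (setgraph `[a, b]%classic (metric_poly n (fun j => `[l j, u j]%classic))) = 1%:E.
Proof.
move=> hab _; rewrite /hausdorff_dim; apply/eqP; rewrite eq_le; apply/andP; split.
  apply/lee_addgt0Pr => e e0; apply: ereal_inf_lbound; exists (1 + e); last by rewrite EFinD.
  split; first by rewrite addr_ge0 // ltW.
  by apply: measure_up => //; rewrite ltrDl.
apply: le_ereal_inf_tmp => _ [s [s0 hs] <-]; rewrite lee_fin leNgt; apply/negP => s1.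
by have := @measure_low R a b n l u hab s (andb_true_intro (conj s0 s1)); rewrite hs eqxx.
Qed.
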